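(* For all $s\ge1$, $\sum_{k=0}^{3}P_k(s)\,E(s+k,0)=0$, where $P_0(s)=2s^3+s^2-8s+5$, $P_1(s)=-26s^3-93s^2-82s-30$, $P_2(s)=-26s^3-141s^2-226s-81$, $P_3(s)=2s^3+17s^2+40s+16$.
   Context: A $p$-string of length $s$ is a correctly matched string of $s$ pairs of parentheses; there are $C_s=\frac{1}{s+1}\binom{2s}{s}$ of them. Given $p$-strings $U$ (upper), $W$ (lower) of length $s$, the meander graph $\Gamma^1_{2s-1}$ is obtained by marking points $0,1,\dots,2s$ on the $x$-axis, taking the segment $[0,2s]$, joining points $a,b$ by an upper semicircle for each matched pair of $U$ at positions $a<b$ (positions $1,\dots,2s$), and points $a-1,b-1$ by a lower semicircle for each matched pair of $W$ at positions $a<b$; the vertices are $1,\dots,2s-1$. A pierced circle at position $i$ ($1\le i\le2s-2$) is present if vertices $i,i+1$ are joined both by an upper and a lower semicircle. $E(s,0)$ is the number of pairs $(U,W)$ whose meander graph has no pierced circle; equivalently $E(s,0)=\sum_{m=0}^{s}(-1)^m\binom{2s-m-1}{m}C_{s-m}^2$. *)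

(* Defs.v *)
From mathcomp Require Import all_boot all_order all_algebra.
Set Implicit Arguments. Unset Strict Implicit. Unset Printing Implicit Defensive.
Import GRing.Theory Num.Theory.

Definition catalan (s : nat) : nat := 'C(s.*2, s) %/ s.+1.

(* E(s,0) = sum_{m=0}^{s} (-1)^m binom(2s-m-1, m) C_{s-m}^2, as an integer.
   (Only used for s >= 1, where 2s-m-1 is never truncated for m <= s.) *)
Local Open Scope ring_scope.
Definition E0 (s : nat) : int :=
  \sum_(0 <= m < s.+1)
     (-1) ^+ m * ('C(s.*2 - m - 1, m))%:Z * ((catalan (s - m)) ^ 2)%:Z.

(* Main.v *)
Require Import Defs.
From mathcomp Require Import all_boot all_order all_algebra.
From mathcomp Require Import zify ring lra.
Import GRing.Theory Num.Theory.
Local Open Scope ring_scope.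

Lemma catalanE n : (catalan n * n.+1 = 'C(n.*2, n))%N.
Proof.
have H := mul_bin_left n.*2 n.
rewrite (_ : n.*2 - n = n)%N in H; last by lia.
have E : 'C(n.*2, n) = (n.+1 * ('C(n.*2, n) - 'C(n.*2, n.+1)))%N.
  rewrite mulnBr mulSn H; lia.
by rewrite /catalan {1}E mulKn // mulnC -E.
Qed.

Lemma catalanS n : (catalan n.+1 * n.+2 = 2 * (n.*2.+1) * catalan n)%N.
Proof.
have h1 := mul_bin_diag (n.+1).*2 n.
have h2 := mul_bin_down (n.*2.+1) n.
have e1 := catalanE n.+1. have e2 := catalanE n.
have E3 : ((n.+1).*2.-1 = n.*2.+1)%N by lia.
rewrite E3 in h1. rewrite /= in h2.
have E4 : (n.*2.+1 - n = n.+1)%N by lia. rewrite E4 in h2.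
apply/eqP; rewrite -(eqn_pmul2r (ltn0Sn n)) -(eqn_pmul2r (ltn0Sn n)); apply/eqP.
rewrite e1.
have -> : ('C((n.+1).*2, n.+1) * n.+1 * n.+1 = (n.+1 * 'C((n.+1).*2, n.+1)) * n.+1)%N by ring.
rewrite -h1.
have -> : ((n.+1).*2 * 'C(n.*2.+1, n) * n.+1 = (n.+1).*2 * (n.+1 * 'C(n.*2.+1, n)))%N by ring.
rewrite -h2 -e2 -!muln2. ring.
Qed.

Lemma L1 (N M K : nat) : M = N.+1 ->
  (M%:R * ('C(N, K))%:R = (M%:R - K%:R) * ('C(M, K))%:R :> rat).
Proof.
move=> ->; case: (leqP K N.+1) => hK.
  have := mul_bin_down N.+1 K; rewrite /= => h.
  by rewrite -natrB // -!natrM h.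
by rewrite !bin_small // ?mulr0 // ltnW.
Qed.

Lemma L2 (N M K : nat) : M = N.+1 -> (K <= N)%N ->
  ((K.+1)%:R * (K.+2)%:R * ('C(M, K.+2))%:R
    = M%:R * (N%:R - K%:R) * ('C(N, K))%:R :> rat).
Proof.
move=> -> hK.
have h1 := mul_bin_diag N.+1 K.+1. rewrite /= in h1.
have h2 := mul_bin_left N K.
rewrite -natrB // -!natrM.
congr (_%:R).
have -> : (K.+1 * K.+2 * 'C(N.+1, K.+2) = K.+1 * (K.+2 * 'C(N.+1, K.+2)))%N by ring.
rewrite -h1 mulnCA h2; ring.
Qed.

Definition f (n j : nat) : rat :=
  (-1) ^+ (n + j) * ('C(n + j - 1, j.*2 - 1) * catalan j ^ 2)%:R.

Lemma fE n i : f n i.+1 = - (-1) ^+ (n + i) * ('C(n + i, i.*2.+1))%:R * (catalan i.+1)%:R ^+ 2.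
Proof.
rewrite /f (_ : n + i.+1 - 1 = n + i)%N; last by lia.
rewrite (_ : i.+1.*2 - 1 = i.*2.+1)%N; last by lia.
by rewrite addnS exprS mulN1r natrM natrX mulrA.
Qed.

Definition Kc (s : nat) : rat := - 2 * (2 * s%:R + 1) * (2 * s%:R + 3) * (2 * s%:R + 5).
Definition G (s j : nat) : rat :=
  Kc s * (j%:R - 1) * (j%:R + 1) ^+ 2 / ((s + j) * (s + j + 1) * (s + j + 2))%:R * f (s + 3) j.
Definition Pq0 (x : rat) := 2 * x ^+ 3 + x ^+ 2 - 8 * x + 5.
Definition Pq1 (x : rat) := - 26 * x ^+ 3 - 93 * x ^+ 2 - 82 * x - 30.
Definition Pq2 (x : rat) := - 26 * x ^+ 3 - 141 * x ^+ 2 - 226 * x - 81.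
Definition Pq3 (x : rat) := 2 * x ^+ 3 + 17 * x ^+ 2 + 40 * x + 16.

Lemma nz (n : nat) : (0 < n)%N -> (n%:R : rat) != 0.
Proof. by rewrite pnatr_eq0 -lt0n. Qed.

Lemma step s i : (i <= s + 2)%N ->
  Pq0 s%:R * f s i.+1 + Pq1 s%:R * f (s + 1) i.+1 + Pq2 s%:R * f (s + 2) i.+1
  + Pq3 s%:R * f (s + 3) i.+1 = G s i.+2 - G s i.+1.
Proof.
move=> hi.
have h0 := L1 (s + i) (s + 1 + i) (i.*2.+1) ltac:(lia).
have h1 := L1 (s + 1 + i) (s + 2 + i) (i.*2.+1) ltac:(lia).
have h2 := L1 (s + 2 + i) (s + 3 + i) (i.*2.+1) ltac:(lia).
have h3 := L2 (s + 3 + i) (s + 4 + i) (i.*2.+1) ltac:(lia) ltac:(lia).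
have hc := congr1 (fun n => n%:R : rat) (catalanS i.+1).
have e0 : ('C(s + i, i.*2.+1))%:R = ((s + 1 + i)%:R - (i.*2.+1)%:R) * ('C(s + 1 + i, i.*2.+1))%:R / (s + 1 + i)%:R :> rat.
  by rewrite -h0 [_ * 'C(_, _)%:R]mulrC mulfK // nz //; lia.
have e1 : ('C(s + 1 + i, i.*2.+1))%:R = ((s + 2 + i)%:R - (i.*2.+1)%:R) * ('C(s + 2 + i, i.*2.+1))%:R / (s + 2 + i)%:R :> rat.
  by rewrite -h1 [_ * 'C(_, _)%:R]mulrC mulfK // nz //; lia.
have e2 : ('C(s + 2 + i, i.*2.+1))%:R = ((s + 3 + i)%:R - (i.*2.+1)%:R) * ('C(s + 3 + i, i.*2.+1))%:R / (s + 3 + i)%:R :> rat.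
  by rewrite -h2 [_ * 'C(_, _)%:R]mulrC mulfK // nz //; lia.
have e3 : ('C(s + 4 + i, i.*2.+3))%:R = (s + 4 + i)%:R * ((s + 3 + i)%:R - (i.*2.+1)%:R) * ('C(s + 3 + i, i.*2.+1))%:R / ((i.*2.+2)%:R * (i.*2.+3)%:R) :> rat.
  by rewrite -h3 [_ * 'C(_, _)%:R]mulrC mulfK // mulf_neq0 // nz.
have ec : (catalan i.+2)%:R = (2 * i.+1.*2.+1 * catalan i.+1)%:R / (i.+3)%:R :> rat.
  by rewrite -hc natrM mulfK // nz.
have sg k : (-1) ^+ (s + k + i) = (-1) ^+ (s + i) * (-1) ^+ k :> rat.
  by rewrite addnAC exprD.
rewrite /G !fE.
rewrite (_ : (s + 3 + i.+1) = (s + 4 + i))%N; last by lia.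
rewrite !sg (_ : i.+1.*2.+1 = i.*2.+3)%N //.
rewrite e0 e1 e2 e3 ec /Pq0 /Pq1 /Pq2 /Pq3 /Kc.
rewrite -!muln2.
field.
have hs : 0 <= s%:R :> rat by exact: ler0n.
have hi' : 0 <= i%:R :> rat by exact: ler0n.
by repeat (apply/andP; split); apply: lt0r_neq0; lra.
Qed.

Lemma E0E n : (0 < n)%N -> (E0 n)%:~R = \sum_(0 <= i < n) f n i.+1 :> rat.
Proof.
move=> hn.
rewrite /E0 rmorph_sum big_nat_rev /= big_ltn // add0n.
rewrite big_add1 /=.
rewrite (_ : n.+1 - 1 = n)%N; last by lia.
rewrite (_ : n.*2 - n - 1 = n.-1)%N; last by lia.
rewrite bin_small; last by lia.
rewrite mulr0 mul0r rmorph0 add0r.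
apply: eq_big_nat => i /andP[_ hi].
rewrite (_ : n.+1 - i.+2 = n - i.+1)%N; last by lia.
rewrite (_ : n - (n - i.+1) = i.+1)%N; last by lia.
rewrite (_ : n.*2 - (n - i.+1) - 1 = n + i)%N; last by lia.
rewrite (_ : (n - i.+1 = (n + i) - i.*2.+1))%N; last by lia.
rewrite bin_sub; last by lia.
rewrite fE !rmorphM /= rmorphXn rmorphN1 !pmulrn.
have -> : (-1) ^+ (n + i) = - (-1) ^+ (n + i - i.*2.+1) :> rat.
  rewrite {1}(_ : n + i = (n + i - i.*2.+1) + i.*2.+1)%N; last by lia.
  by rewrite exprD -(signr_odd _ i.*2.+1) /= odd_double /= mulrN1.
by rewrite opprK expr2.
Qed.

Lemma ext n N : (n <= N)%N -> \sum_(0 <= i < n) f n i.+1 = \sum_(0 <= i < N) f n i.+1.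
Proof.
move=> hN; rewrite (big_cat_nat (leq0n n) hN) /=.
rewrite [X in _ = _ + X]big1_seq ?addr0 // => i /andP[_].
rewrite mem_index_iota => /andP[h1 _].
by rewrite fE bin_small ?mulr0 ?mul0r //; lia.
Qed.

Lemma key s : (1 <= s)%N ->
  Pq0 s%:R * (E0 s)%:~R + Pq1 s%:R * (E0 (s + 1))%:~R + Pq2 s%:R * (E0 (s + 2))%:~R
  + Pq3 s%:R * (E0 (s + 3))%:~R = 0.
Proof.
move=> hs.
rewrite !E0E; try lia.
rewrite (@ext (s) (s + 3)); last by lia.
rewrite (@ext (s + 1) (s + 3)); last by lia.
rewrite (@ext (s + 2) (s + 3)); last by lia.
rewrite !big_distrr -!big_split /=.
rewrite (eq_big_nat _ _ (F2 := fun i => G s i.+2 - G s i.+1)); last first.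
  move=> i /andP[_ hi]; apply: step; lia.
rewrite (telescope_sumr (fun k => G s k.+1)) //.
rewrite /G (_ : 1%:R - 1 = 0 :> rat); last by rewrite subrr.
rewrite mulr0 !mul0r subr0.
rewrite /f (_ : 'C(s + 3 + (s + 3).+1 - 1, (s + 3).+1.*2 - 1) = 0)%N.
  by rewrite mul0n mulr0 mulr0.
by rewrite bin_small //; lia.
Qed.

Theorem lemma4p2 (s : nat) (hs : (1 <= s)%N) :
  let z : int := s%:Z in
  (2 * z ^+ 3 + z ^+ 2 - 8 * z + 5) * E0 s
  + (- 26 * z ^+ 3 - 93 * z ^+ 2 - 82 * z - 30) * E0 s.+1
  + (- 26 * z ^+ 3 - 141 * z ^+ 2 - 226 * z - 81) * E0 s.+2
  + (2 * z ^+ 3 + 17 * z ^+ 2 + 40 * z + 16) * E0 s.+3 = 0.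
Proof.
move=> z.
apply: (@intr_inj rat).
have K := @key s hs.
rewrite !addn1 !addn2 !addn3 /Pq0 /Pq1 /Pq2 /Pq3 in K.
rewrite rmorph0 -K /z.
ring.
Qed.
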